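(* Under the hypotheses: $(\boldsymbol\Sigma,\sigma)$ is a primitive Markov subshift on a countable alphabet with associated $\mathbb F$, $K_0$; $A:\boldsymbol\Sigma\to\mathbb R$ is bounded above, locally H\''older continuous with constant $H_A$, and $\inf A|_{\bigcup_{i\in\mathbb F}[i]}>-\infty$. Define $$u_A(\mathbf x)=\sup\{S_k(A-\beta_A)(\mathbf y):k\ge0,\ \mathbf y\in\boldsymbol\Sigma,\ \sigma^k(\mathbf y)=\mathbf x\}.$$ Then for all $\mathbf x\in\boldsymbol\Sigma$, $$0\le u_A(\mathbf x)\le\max\Big\{\mathrm{Var}(A)+K_0\big(\sup A-\inf A|_{\bigcup_{i\in\mathbb F}[i]}\big),\ K_0(\sup A-\beta_A)\Big\},$$ $A+u_A-u_A\circ\sigma\le\beta_A$, and $\mathrm{Var}_k(u_A)\le\frac{H_A}{1-\lambda}\lambda^k$ for all $k\ge1$.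
   Context: Let $\mathbf M:\mathbb Z_+\times\mathbb Z_+\to\{0,1\}$ be a transition matrix. Put $\mathcal B_0=\{i:\mathbf M(i,j)=1\text{ for some }j\}$, $\mathcal B_n=\{i:\mathbf M(i,j)=1\text{ for some }j\in\mathcal B_{n-1}\}$. $\mathbf M$ is primitive if there exist $\mathbb F\subseteq\mathbb Z_+$ and an integer $K_0\ge0$ such that for all $i,j\in\bigcap_{n\ge0}\mathcal B_n$ there are $\ell_1,\dots,\ell_{K_0}\in\mathbb F$ with $\mathbf M(i,\ell_1)\mathbf M(\ell_1,\ell_2)\cdots\mathbf M(\ell_{K_0},j)=1$. $\boldsymbol\Sigma=\{\mathbf x\in\mathbb Z_+^{\mathbb Z_+}:\mathbf M(x_j,x_{j+1})=1\ \forall j\}$ with metric $d(\mathbf x,\mathbf y)=\lambda^{\min\{j:x_j\neq y_j\}}$, $\lambda\in(0,1)$ fixed; $\sigma$ the left shift; $[i]=\{\mathbf x:x_0=i\}$. $\mathcal M_\sigma$ = $\sigma$-invariant Borel probabilities; $\beta_A=\sup_{\mu\in\mathcal M_\sigma}\int A\,d\mu$. $S_kA=\sum_{j=0}^{k-1}A\circ\sigma^j$, $S_0A=0$. $\mathrm{Var}_k(A)=\sup\{A(\mathbf x)-A(\mathbf y):d(\mathbf x,\mathbf y)\le\lambda^k\}$; $\mathrm{Var}(A)=\sum_{k\ge1}\mathrm{Var}_k(A)$; $A$ is locally H\''older continuous with constant $H_A>0$ if $\mathrm{Var}_k(A)\le H_A\lambda^k$ for all $k\ge1$. *)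

(* Defs.v *)
From HB Require Import structures.
From mathcomp Require Import all_boot all_order all_algebra.
From mathcomp Require Import all_classical all_reals all_analysis.

Import Order.TTheory GRing.Theory Num.Theory.
Local Open Scope classical_set_scope.
Local Open Scope ring_scope.

(* transition matrix M : Z_+ x Z_+ -> {0,1}; "M i j = 1" is rendered as M i j = true *)
Definition admissible (M : nat -> nat -> bool) (x : nat -> nat) : Prop :=
  forall j, M (x j) (x j.+1).

Definition Sigma (M : nat -> nat -> bool) : Type := {x : nat -> nat | admissible M x}.

Definition sshift {M : nat -> nat -> bool} (x : Sigma M) : Sigma M :=
  exist (admissible M) (fun j => sval x j.+1) (fun j => svalP x j.+1).

Fixpoint Bn (M : nat -> nat -> bool) (n : nat) : set nat :=
  match n with
  | 0 => [set i | exists j, M i j]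
  | n'.+1 => [set i | exists j, Bn M n' j /\ M i j]
  end.

Definition coreB (M : nat -> nat -> bool) : set nat := \bigcap_(n in setT) Bn M n.

Definition primitive_with (M : nat -> nat -> bool) (F : set nat) (K0 : nat) : Prop :=
  forall i j, coreB M i -> coreB M j ->
    exists l : nat -> nat,
      [/\ l 0 = i, l K0.+1 = j,
          (forall t, (1 <= t <= K0)%N -> F (l t)) &
          (forall t, (t <= K0)%N -> M (l t) (l t.+1))].

Definition cyl (M : nat -> nat -> bool) (i : nat) : set (Sigma M) := [set x | sval x 0 = i].
Definition cylF (M : nat -> nat -> bool) (F : set nat) : set (Sigma M) :=
  \bigcup_(i in F) cyl M i.

Definition dist {R : realType} (lam : R) {M : nat -> nat -> bool} (x y : Sigma M) : R :=
  match pselect (exists j, (fun j => sval x j != sval y j) j) with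
  | left h => lam ^+ (ex_minn h)
  | right _ => 0
  end.

Definition d_open {R : realType} (lam : R) {M : nat -> nat -> bool} (U : set (Sigma M)) : Prop :=
  forall x, U x -> exists2 e : R, 0 < e & forall y, dist lam x y < e -> U y.

(* Sigma with a designated point x0 (only used to equip the type with the
   pointed structure that MathComp-Analysis' measurable types require). *)
Definition SigmaP {M : nat -> nat -> bool} (x0 : Sigma M) : Type := Sigma M.
HB.instance Definition _ M x0 := gen_eqMixin (@SigmaP M x0).
HB.instance Definition _ M x0 := gen_choiceMixin (@SigmaP M x0).
HB.instance Definition _ M x0 := isPointed.Build (@SigmaP M x0) x0.

Definition openSets {R : realType} (lam : R) {M : nat -> nat -> bool} (x0 : Sigma M)
  : set (set (@SigmaP M x0)) := [set U | d_open lam U].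

Definition BorelSigma {R : realType} (lam : R) {M : nat -> nat -> bool} (x0 : Sigma M) :=
  g_sigma_algebraType (openSets lam x0).

Definition shift_invariant {R : realType} {lam : R} {M : nat -> nat -> bool} {x0 : Sigma M}
  (mu : probability (BorelSigma lam x0) R) : Prop :=
  forall B : set (BorelSigma lam x0), measurable B ->
    mu ((@sshift M) @^-1` B) = mu B.

Local Open Scope ereal_scope.

Definition betaA {R : realType} (lam : R) {M : nat -> nat -> bool} (x0 : Sigma M)
  (A : Sigma M -> R) : \bar R :=
  ereal_sup [set r | exists mu : probability (BorelSigma lam x0) R,
                       shift_invariant mu /\ r = \int[mu]_x (A x)%:E].

Definition Sk {R : realType} {M : nat -> nat -> bool} (f : Sigma M -> R) (k : nat) (y : Sigma M) : R :=
  (\sum_(j < k) f (iter j (@sshift M) y))%R.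

Definition VarkE {R : realType} (lam : R) {M : nat -> nat -> bool} (f : Sigma M -> \bar R) (k : nat)
  : \bar R :=
  ereal_sup [set r | exists x y, (dist lam x y <= lam ^+ k)%R /\ r = f x - f y].

Definition Vark {R : realType} (lam : R) {M : nat -> nat -> bool} (A : Sigma M -> R) (k : nat) : \bar R :=
  VarkE lam (fun x => (A x)%:E) k.

Definition Var {R : realType} (lam : R) {M : nat -> nat -> bool} (A : Sigma M -> R) : \bar R :=
  \sum_(1 <= k <oo) Vark lam A k.

Definition supA {R : realType} {M : nat -> nat -> bool} (A : Sigma M -> R) : \bar R :=
  ereal_sup (range (fun x => (A x)%:E)).

Definition infAF {R : realType} {M : nat -> nat -> bool} (F : set nat) (A : Sigma M -> R) : \bar R :=
  ereal_inf [set (A x)%:E | x in cylF M F].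

Definition uA {R : realType} (lam : R) {M : nat -> nat -> bool} (x0 : Sigma M)
  (A : Sigma M -> R) (x : Sigma M) : \bar R :=
  ereal_sup [set r | exists k y, iter k (@sshift M) y = x /\
                      r = (Sk A k y)%:E - (k%:R)%:E * betaA lam x0 A].

(* Main.v *)
Require Import Defs.
From HB Require Import structures.
From mathcomp Require Import all_boot all_order all_algebra.
From mathcomp Require Import all_classical all_reals all_analysis.
From mathcomp Require Import measurable_realfun.
From Stdlib Require Import Lia.
From mathcomp Require Import zify ring lra.
Import Order.TTheory GRing.Theory Num.Theory.
Local Open Scope classical_set_scope.
Local Open Scope ring_scope.
Section Comb.
Variable M : nat -> nat -> bool.

Lemma sig_eqP (x y : Sigma M) : sval x = sval y -> x = y.
Proof.
case: x => fx px; case: y => fy py /= e; subst fy.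
by congr exist; apply: Prop_irrelevance.
Qed.

Lemma iter_val n (x : Sigma M) j : sval (iter n (@sshift M) x) j = sval x (n + j)%N.
Proof.
elim: n x j => [//|n IH] x j.
by rewrite iterS /= IH addSnnS.
Qed.

Lemma sym_core (y : Sigma M) j : coreB M (sval y j).
Proof.
move=> n _; elim: n j => [|n IH] j /=.
  by exists (sval y j.+1); exact: (svalP y j).
by exists (sval y j.+1); split; [exact: IH | exact: (svalP y j)].
Qed.

Lemma close (F : set nat) (K0 : nat) : primitive_with M F K0 ->
  forall (y : Sigma M) k, (0 < k)%N -> exists z : Sigma M,
  [/\ iter (k + K0) (@sshift M) z = z, (forall j, (j < k)%N -> sval z j = sval y j)
   & (forall t, (t < K0)%N -> F (sval z (k + t)%N))].
Proof.
move=> HP y k k0.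
have [l [l0 lK lF lM]] := HP _ _ (sym_core y k.-1) (sym_core y 0).
pose w j := if (j < k.-1)%N then sval y j else l (j - k.-1)%N.
have w1 j : (j < k)%N -> w j = sval y j.
  move=> jk; rewrite /w; case: ifP => // /negbT; rewrite -leqNgt => h.
  have -> : j = k.-1 by lia.
  by rewrite subnn l0.
have w2 j : (k.-1 <= j)%N -> w j = l (j - k.-1)%N.
  by move=> h; rewrite /w ifF //; apply/negbTE; rewrite -leqNgt.
set p := (k + K0)%N.
have p0 : (0 < p)%N by rewrite /p; lia.
have wp : w p = w 0%N.
  rewrite (w1 0%N) // (w2 p); last by rewrite /p; lia.
  by rewrite -lK; congr l; rewrite /p; lia.
have wM i : (i < p)%N -> M (w i) (w i.+1).
  move=> ip; case: (ltnP i k.-1) => h.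
  - rewrite !w1; [exact: (svalP y i)| lia | lia].
  - rewrite !w2; [|lia|lia]. have -> : (i.+1 - k.-1 = (i - k.-1).+1)%N by lia.
    apply: lM; rewrite /p in ip; lia.
have wmod i : w (i.+1 %% p)%N = w (i %% p).+1.
  have ilt : (i %% p < p)%N by rewrite ltn_pmod.
  rewrite -addn1 -modnDml addn1; case: (ltnP (i %% p).+1 p) => h.
    by rewrite modn_small.
  have -> : (i %% p).+1 = p by lia.
  by rewrite modnn wp.
have adm : admissible M (fun j => w (j %% p)%N).
  move=> j /=; rewrite wmod; apply: wM; by rewrite ltn_pmod.
exists (exist _ _ adm); split.
- apply: sig_eqP; apply: funext => j; rewrite iter_val /=.
  by rewrite modnDl.
- move=> j jk /=; rewrite modn_small ?w1 //; rewrite /p; lia.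
- move=> t tK /=; rewrite modn_small; last by rewrite /p; lia.
  rewrite w2; last lia.
  apply: lF; lia.
Qed.
End Comb.
Arguments close {M F K0}.
Arguments iter_val {M}.
Arguments sig_eqP {M}.
Arguments sym_core {M}.
Section Dist.
Variables (R : realType) (lam : R) (M : nat -> nat -> bool).
Hypothesis l0 : 0 < lam.
Hypothesis l1 : lam < 1.

Lemma dist_le (x y : Sigma M) k :
  (forall j, (j < k)%N -> sval x j = sval y j) -> dist lam x y <= lam ^+ k.
Proof.
move=> H; rewrite /dist; case: pselect => [h|_]; last by rewrite exprn_ge0 ?ltW.
case: ex_minnP => m Pm _.
apply: ler_wiXn2l; [exact: ltW|exact: ltW|].
rewrite leqNgt; apply/negP => mk.
by move: Pm; rewrite H // eqxx.
Qed.

Lemma dist_agree (x y : Sigma M) k :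
  dist lam x y <= lam ^+ k -> forall j, (j < k)%N -> sval x j = sval y j.
Proof.
rewrite /dist; case: pselect => [h|nh].
  case: ex_minnP => m Pm minm.
  rewrite ler_iXn2l // => km j jk.
  apply/eqP; apply/negP => /negP nj.
  have := minm j nj; lia.
move=> _ j _; apply/eqP; apply/negP => /negP nj.
by apply: nh; exists j.
Qed.

Lemma dist_refl (x : Sigma M) k : dist lam x x <= lam ^+ k.
Proof. exact: dist_le. Qed.

Lemma geo_le n : \sum_(i < n) lam ^+ i <= (1 - lam)^-1.
Proof.
have l1' : 0 < 1 - lam by rewrite subr_gt0.
have E : (1 - lam) * \sum_(i < n) lam ^+ i = 1 - lam ^+ n.
  elim: n => [|n IH]; first by rewrite big_ord0 mulr0 expr0 subrr.
  rewrite big_ord_recr /= mulrDr IH exprS; ring.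
rewrite -(ler_pM2l l1') E mulfV ?gt_eqF //.
by rewrite lerBlDr lerDl exprn_ge0 // ltW.
Qed.

Lemma small_pow (e : R) : 0 < e -> exists k, lam ^+ k < e.
Proof.
move=> e0.
have := @cvg_expr R lam; rewrite ger0_norm ?ltW // => /(_ l1) /cvgr0_norm_lt /(_ e e0).
move=> [N _ HN]; exists N; have := HN N (leqnn N) => /=.
by rewrite ger0_norm // exprn_ge0 // ltW.
Qed.
End Dist.
Arguments dist_le {R lam M}.
Arguments dist_agree {R lam M}.
Arguments dist_refl {R lam M}.
Arguments geo_le {R lam}.
Arguments small_pow {R lam}.
Section Meas.
Variables (R : realType) (lam : R) (M : nat -> nat -> bool) (x0 : Sigma M).
Variables (A : Sigma M -> R) (HA : R).
Hypothesis l0 : 0 < lam.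
Hypothesis l1 : lam < 1.
Hypothesis HA0 : 0 < HA.
Hypothesis HV : forall k : nat, (1 <= k)%N -> (Vark lam A k <= (HA * lam ^+ k)%:E)%E.

Lemma var_pair k (x y : Sigma M) : dist lam x y <= lam ^+ k ->
  ((A x - A y)%:E <= Vark lam A k)%E.
Proof. by move=> h; apply: ereal_sup_ubound; exists x, y; split. Qed.

Lemma A_meas : measurable_fun setT (A : BorelSigma lam x0 -> R).
Proof.
move=> mD; apply: (measurability _ (measurable_realfun.RGenOInfty.measurableE R)) => //.
move=> /= _ [_ [x ->] <-]; apply: measurableI => //.
apply: sub_sigma_algebra => y /=; rewrite in_itv /= andbT => xy.
have e0 : 0 < (A y - x) / HA by rewrite divr_gt0 // subr_gt0.
have [k hk] := small_pow l0 l1 _ e0.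
exists (lam ^+ k.+1); first by rewrite exprn_gt0.
move=> z dz; rewrite in_itv /= andbT.
have := le_trans (var_pair _ _ _ (ltW dz)) (HV _ (ltn0Sn k)); rewrite lee_fin => h.
have : lam ^+ k.+1 <= lam ^+ k by rewrite ler_wiXn2l // ltW.
move: hk; rewrite ltr_pdivlMr // => hk hl.
have : HA * lam ^+ k.+1 <= HA * lam ^+ k by rewrite ler_pM2l.
lra.
Qed.
End Meas.
Section Orb.
Context d (T : measurableType d) (R : realType) (q : nat) (z : nat -> T).
Definition orbw : {nonneg R} := ((q.+1)%:R^-1)%:nng.
Local Open Scope ereal_scope.
Definition orbmu : set T -> \bar R := mscale orbw (msum (fun j => \d_(z j)) q.+1).
HB.instance Definition _ := Measure.on orbmu.

Lemma orbmuE U : orbmu U = ((q.+1)%:R^-1)%R%:E * \sum_(j < q.+1) \d_(z j) U.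
Proof. by []. Qed.

Lemma orbmu_setT : orbmu setT = 1.
Proof.
rewrite orbmuE (eq_bigr (fun _ => 1)); last by move=> j _; rewrite diracT.
rewrite sumEFin /= sumr_const card_ord -EFinM mulVf //.
Qed.

HB.instance Definition _ := Measure_isProbability.Build _ _ _ orbmu orbmu_setT.

Lemma orbmu_int (f : T -> \bar R) : measurable_fun [set: T] f -> (forall x, 0 <= f x) ->
  \int[orbmu]_x f x = ((q.+1)%:R^-1)%R%:E * \sum_(j < q.+1) f (z j).
Proof.
move=> mf f0.
rewrite ge0_integral_mscale //= ge0_integral_measure_sum //; congr (_ * _).
by apply: eq_bigr => j _; rewrite integral_dirac // diracT mul1e.
Qed.
End Orb.
Arguments orbmu {d T R}.
Arguments orbmuE {d T R}.
Arguments orbmu_int {d T R}.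
Section Meas2.
Variables (R : realType) (lam : R) (M : nat -> nat -> bool) (x0 : Sigma M).
Variables (A : Sigma M -> R).
Hypothesis mA : measurable_fun setT (A : BorelSigma lam x0 -> R).

Lemma orb_int (q : nat) (z : nat -> BorelSigma lam x0) :
  (\int[orbmu q z]_x (A x)%:E = (((q.+1)%:R^-1) * \sum_(j < q.+1) A (z j))%:E)%E.
Proof.
have mAE : measurable_fun setT (fun x : BorelSigma lam x0 => (A x)%:E).
  by apply/measurable_EFinP.
rewrite integralE !orbmu_int; last first.
all: try (by move=> x; rewrite ?funeposE ?funenegE le_max lexx orbT).
all: try (exact: measurable_funepos); try (exact: measurable_funeneg).
rewrite (eq_bigr (fun j : 'I_q.+1 => (Num.max (A (z j)) 0)%:E)); last first.
  by move=> j _; rewrite funeposE -EFin_max.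
rewrite [X in (_ - _ * X)%E](eq_bigr (fun j : 'I_q.+1 => (Num.max (- A (z j)) 0)%:E)); last first.
  by move=> j _; rewrite funenegE -EFin_max.
rewrite !sumEFin -!EFinM -EFinB; congr EFin.
rewrite -mulrBr -sumrB; congr (_ * _); apply: eq_bigr => j _.
by rewrite !maxEle; case: leP => h1; case: leP => h2; lra.
Qed.
End Meas2.
Section Beta.
Variables (R : realType) (lam : R) (M : nat -> nat -> bool) (x0 : Sigma M).
Variables (A : Sigma M -> R).
Hypothesis mA : measurable_fun setT (A : BorelSigma lam x0 -> R).

Lemma orb_inv (z0 : Sigma M) q : iter q.+1 (@sshift M) z0 = z0 ->
  shift_invariant (orbmu q (fun j => iter j (@sshift M) z0 : BorelSigma lam x0)).
Proof.
move=> per B mB /=; rewrite !orbmuE; congr (_ * _)%E.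
pose z j := iter j (@sshift M) z0 : BorelSigma lam x0.
change (\sum_(j < q.+1) \d_(z j) (@sshift M @^-1` B) = \sum_(j < q.+1) \d_(z j) B :> \bar R).
have e j : \d_(z j) (@sshift M @^-1` B) = \d_(z j.+1) B :> \bar R.
  rewrite !diracE /z iterS; congr ((_ : bool)%:R%:E); apply/idP/idP; rewrite !inE //.
rewrite (eq_bigr (fun j : 'I_q.+1 => \d_(z j.+1) B)); last by move=> j _; exact: e.
rewrite big_ord_recr big_ord_recl /=.
have -> : sshift (z q) = z0 by rewrite /z -iterS per.
by rewrite addeC; congr (_ + _)%E; apply: eq_bigr => j _; rewrite add0n.
Qed.

Lemma beta_ge (z0 : Sigma M) q : iter q.+1 (@sshift M) z0 = z0 ->
  (((q.+1)%:R^-1 * Sk A q.+1 z0)%:E <= betaA lam x0 A)%E.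
Proof.
move=> per; apply: ereal_sup_ubound.
exists (orbmu q (fun j => iter j (@sshift M) z0 : BorelSigma lam x0)); split.
  exact: orb_inv.
by rewrite orb_int.
Qed.
End Beta.
Arguments beta_ge {R lam M x0 A}.
Section BetaLe.
Variables (R : realType) (lam : R) (M : nat -> nat -> bool) (x0 : Sigma M).
Variables (A : Sigma M -> R).
Hypothesis mA : measurable_fun setT (A : BorelSigma lam x0 -> R).

Lemma beta_le c : (forall x, A x <= c) -> (betaA lam x0 A <= c%:E)%E.
Proof.
move=> hc; apply: ge_ereal_sup => _ [mu [_ ->]].
have mAE : measurable_fun setT (fun x : BorelSigma lam x0 => (A x)%:E).
  by apply/measurable_EFinP.
rewrite integralE.
have mP : measurable_fun setT (fun x : BorelSigma lam x0 => (fun x => (A x)%:E)^\+ x)%E.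
  exact: measurable_funepos.
have mN : measurable_fun setT (fun x : BorelSigma lam x0 => (fun x => (A x)%:E)^\- x)%E.
  exact: measurable_funeneg.
have h1 : (\int[mu]_x (fun x => (A x)%:E)^\+ x <= (Num.max c 0)%:E)%E.
  rewrite -[X in (_ <= X)%E]mule1 -(probability_setT mu) -integral_cst //.
  apply: ge0_le_integral => //.
  move=> x _; rewrite funeposE -EFin_max lee_fin /=.
  have hx := hc x; rewrite !maxEle; case: (leP (A x) 0) => g1; case: (leP c 0) => g2; lra.
have h2 : ((Num.max (- c) 0)%:E <= \int[mu]_x (fun x => (A x)%:E)^\- x)%E.
  rewrite -[X in (X <= _)%E]mule1 -(probability_setT mu) -integral_cst //.
  apply: ge0_le_integral => //.
    by move=> x _; rewrite /= lee_fin le_max lexx orbT.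
  move=> x _; rewrite funenegE -EFin_max lee_fin /=.
  have hx := hc x; rewrite !maxEle; case: (leP (- A x) 0) => g1; case: (leP (- c) 0) => g2; lra.
apply: le_trans (leeB h1 h2) _; rewrite -EFinB lee_fin.
rewrite !maxEle; case: (leP c 0) => h3; case: (leP (- c) 0) => h4; lra.
Qed.
End BetaLe.
Arguments beta_le {R lam M x0 A}.
Section Main.
Variables (R : realType) (lam : R) (M : nat -> nat -> bool) (F : set nat) (K0 : nat).
Variables (x0 : Sigma M) (A : Sigma M -> R) (HA c : R).
Hypothesis l0 : 0 < lam.
Hypothesis l1 : lam < 1.
Hypothesis HP : primitive_with M F K0.
Hypothesis hc : forall x, A x <= c.
Hypothesis HA0 : 0 < HA.
Hypothesis HV : forall k : nat, (1 <= k)%N -> (Vark lam A k <= (HA * lam ^+ k)%:E)%E.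
Hypothesis hinf : (-oo < infAF F A)%E.

Let mA := @A_meas R lam M x0 A HA l0 l1 HA0 HV.

Lemma vark_ge0 i : (0 <= Vark lam A i)%E.
Proof.
apply: ereal_sup_ubound; exists x0, x0; split; first exact: dist_refl.
by rewrite subee.
Qed.

Lemma vark_fin i : (1 <= i)%N -> Vark lam A i = (fine (Vark lam A i))%:E.
Proof.
move=> i1; rewrite fineK // ge0_fin_numE ?vark_ge0 //.
exact: le_lt_trans (HV _ i1) (ltry _).
Qed.

Lemma var_partial n : (\sum_(1 <= i < n) Vark lam A i <= Var lam A)%E.
Proof. by apply: nneseries_lim_ge => i _ _; exact: vark_ge0. Qed.

Lemma var_ub : (Var lam A <= (HA / (1 - lam))%:E)%E.
Proof.
have -> : Var lam A = ereal_sup (range (fun n => \sum_(1 <= i < n) Vark lam A i)%E).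
  apply/cvg_lim => //; apply: ereal_nondecreasing_cvgn.
  by apply: ereal_nondecreasing_series => i _ _; exact: vark_ge0.
apply: ge_ereal_sup => _ [n _ <-].
rewrite big_nat_cond.
apply: (@le_trans _ _ (\sum_(1 <= i < n | (1 <= i < n)%N && true) (HA * lam ^+ i)%:E)%E).
  by apply: lee_sum => i /andP[/andP[i1 _] _]; exact: HV.
rewrite -big_nat_cond sumEFin lee_fin.
case: n => [|n]; first by rewrite big_geq // divr_ge0 // ltW // subr_gt0.
rewrite -mulr_sumr ler_pM2l // (le_trans _ (geo_le l0 l1 n.+1)) //.
by rewrite -(big_mkord xpredT (fun i => lam ^+ i)) (big_ltn (ltn0Sn n)) expr0 lerDr ler01.
Qed.


Lemma per_exists : exists z : Sigma M, iter K0.+1 (@sshift M) z = z.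
Proof. by have [z [hz _ _]] := close HP x0 1 (ltn0Sn 0); exists z; rewrite -add1n. Qed.

Lemma beta_fin : betaA lam x0 A = (fine (betaA lam x0 A))%:E.
Proof.
have [z hz] := per_exists.
have h1 := beta_ge mA _ _ hz; have h2 := beta_le mA _ hc.
rewrite fineK // fin_numElt; apply/andP; split.
  exact: lt_le_trans (ltNyr _) h1.
exact: le_lt_trans h2 (ltry _).
Qed.

Lemma sup_fin : supA A = (fine (supA A))%:E.
Proof.
have h1 : (supA A <= c%:E)%E by apply: ge_ereal_sup => _ [x _ <-]; rewrite lee_fin.
have h2 : ((A x0)%:E <= supA A)%E by apply: ereal_sup_ubound; exists x0.
rewrite fineK // fin_numElt; apply/andP; split.
  exact: lt_le_trans (ltNyr _) h2.
exact: le_lt_trans h1 (ltry _).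
Qed.

Lemma A_le_s x : A x <= fine (supA A).
Proof.
by rewrite -lee_fin -sup_fin; apply: ereal_sup_ubound; exists x.
Qed.

Lemma b_le_s : fine (betaA lam x0 A) <= fine (supA A).
Proof. by rewrite -lee_fin -beta_fin; exact: beta_le mA _ A_le_s. Qed.

Lemma var_fin : Var lam A = (fine (Var lam A))%:E.
Proof.
have h1 := var_partial 0; rewrite big_geq // in h1.
rewrite fineK // fin_numElt; apply/andP; split.
  exact: lt_le_trans (ltNyr _) h1.
exact: le_lt_trans var_ub (ltry _).
Qed.

Lemma Vpart k : \sum_(j < k) fine (Vark lam A j.+1) <= fine (Var lam A).
Proof.
rewrite -lee_fin -var_fin -sumEFin.
apply: le_trans (var_partial k.+1); rewrite big_add1 /= big_mkord.
by rewrite le_eqVlt; apply/orP; left; apply/eqP; apply: eq_bigr => i _; rewrite -vark_fin.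
Qed.

Lemma diff_le (y z : Sigma M) k : (forall j, (j < k)%N -> sval z j = sval y j) ->
  Sk A k y - Sk A k z <= fine (Var lam A).
Proof.
move=> agr; apply: le_trans (Vpart k); rewrite /Sk -sumrB.
rewrite (reindex_inj rev_ord_inj) /=.
apply: ler_sum => j _.
have jk := ltn_ord j.
rewrite -lee_fin -vark_fin; last by lia.
rewrite EFinB; apply: var_pair; apply: (dist_le l0 l1) => i hi.
rewrite !iter_val agr //; lia.
Qed.

Lemma key (y : Sigma M) k : (0 < k)%N -> exists z : Sigma M,
  Sk A k y - k%:R * fine (betaA lam x0 A) <=
     fine (Var lam A) + \sum_(t < K0) (fine (betaA lam x0 A) - A (iter (k + t) (@sshift M) z))
  /\ (forall t, (t < K0)%N -> cylF M F (iter (k + t) (@sshift M) z)).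
Proof.
move=> k0; have [z [per agr Fz]] := close HP y k k0.
exists z; split; last first.
  move=> t tK; exists (sval z (k + t)%N); first exact: Fz.
  by rewrite /cyl /= iter_val addn0.
set b := fine _.
have p0 : (0 < k + K0)%N by lia.
have per' : iter (k + K0).-1.+1 (@sshift M) z = z by rewrite prednK.
have hb := beta_ge mA _ _ per'; rewrite beta_fin lee_fin prednK // in hb.
rewrite ler_pdivrMl ?ltr0n // in hb.
have hsplit : Sk A (k + K0) z = Sk A k z + \sum_(t < K0) A (iter (k + t) (@sshift M) z).
  by rewrite /Sk big_split_ord.
have hd := diff_le _ _ _ agr.
rewrite sumrB sumr_const card_ord -[_ *+ K0]mulr_natl.
rewrite hsplit natrD mulrDl in hb.
rewrite /b; move: hb hd.
set u1 := (k%:R * fine _); set u2 := (K0%:R * fine _).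
lra.
Qed.

Lemma inf_le w : cylF M F w -> (infAF F A <= (A w)%:E)%E.
Proof. by move=> hw; apply: ereal_inf_lbound; exists w. Qed.

Lemma elem_bound k y : (0 < k)%N ->
  ((Sk A k y - k%:R * fine (betaA lam x0 A))%:E <=
     Var lam A + (K0%:R)%:E * (supA A - infAF F A))%E.
Proof.
move=> k0; have [z [h1 h2]] := key y k k0.
case: (posnP K0) => [K00|K0pos].
  rewrite K00 big_ord0 addr0 in h1.
  by rewrite K00 mul0e adde0 var_fin lee_fin.
have hi := inf_le _ (h2 0%N K0pos).
have infE : infAF F A = (fine (infAF F A))%:E.
  rewrite fineK // fin_numElt hinf /=; exact: le_lt_trans hi (ltry _).
have each (t : 'I_K0) : fine (betaA lam x0 A) - A (iter (k + t) (@sshift M) z)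
    <= fine (supA A) - fine (infAF F A).
  have := inf_le _ (h2 t (ltn_ord t)); rewrite infE lee_fin => h.
  have := b_le_s; lra.
rewrite var_fin sup_fin infE -EFinB -EFinM -EFinD lee_fin.
apply: le_trans h1 _; rewrite lerD2l.
apply: le_trans (ler_sum _ (fun t _ => each t)) _.
by rewrite sumr_const card_ord mulr_natl.
Qed.

Lemma uA_ub x : (uA lam x0 A x <= maxe (Var lam A + (K0%:R)%:E * (supA A - infAF F A))
             ((K0%:R)%:E * (supA A - betaA lam x0 A)))%E.
Proof.
apply: ge_ereal_sup => _ [k [y [hy ->]]].
have -> : ((Sk A k y)%:E - (k%:R)%:E * betaA lam x0 A =
   (Sk A k y - k%:R * fine (betaA lam x0 A))%:E)%E.
  by rewrite beta_fin -EFinM -EFinB.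
case: k hy => [|k] hy.
  rewrite le_max; apply/orP; right.
  rewrite sup_fin beta_fin -EFinB -EFinM lee_fin /Sk big_ord0 mul0r subr0.
  by rewrite mulr_ge0 // subr_ge0 b_le_s.
by rewrite le_max; apply/orP; left; exact: elem_bound.
Qed.

Lemma uA_ge0 x : (0 <= uA lam x0 A x)%E.
Proof.
apply: ereal_sup_ubound; exists 0%N, x; split => //.
by rewrite /Sk big_ord0 mul0e subee.
Qed.

Lemma inf_fin : (0 < K0)%N -> infAF F A = (fine (infAF F A))%:E.
Proof.
move=> K0pos; have [z [_ _ hF]] := close HP x0 1 (ltn0Sn 0).
have hw : cylF M F (iter 1 (@sshift M) z).
  by exists (sval z (1 + 0)%N); [exact: hF | rewrite /cyl /=].
have hi := inf_le _ hw.
rewrite fineK // fin_numElt hinf /=; exact: le_lt_trans hi (ltry _).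
Qed.

Lemma maxe_fin : exists B : R, (maxe (Var lam A + (K0%:R)%:E * (supA A - infAF F A))
             ((K0%:R)%:E * (supA A - betaA lam x0 A)) <= B%:E)%E.
Proof.
case: (posnP K0) => [K00|K0pos].
  exists (Num.max (fine (Var lam A)) 0).
  by rewrite K00 !mul0e adde0 var_fin -EFin_max.
exists (Num.max (fine (Var lam A) + K0%:R * (fine (supA A) - fine (infAF F A)))
   (K0%:R * (fine (supA A) - fine (betaA lam x0 A)))).
by rewrite var_fin sup_fin (inf_fin K0pos) beta_fin -!EFinB -!EFinM -EFinD -EFin_max.
Qed.

Lemma uA_fin x : uA lam x0 A x = (fine (uA lam x0 A x))%:E.
Proof.
have [B hB] := maxe_fin.
rewrite fineK // fin_numElt; apply/andP; split.
  exact: lt_le_trans (ltNyr 0) (uA_ge0 x).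
exact: le_lt_trans (le_trans (uA_ub x) hB) (ltry _).
Qed.

Lemma uA_shift x :
  ((A x)%:E + uA lam x0 A x - uA lam x0 A (sshift x) <= betaA lam x0 A)%E.
Proof.
have hbE := beta_fin; set b := fine _ in hbE.
have h : (uA lam x0 A x <= (fine (uA lam x0 A (sshift x)) - (A x - b))%:E)%E.
  apply: ge_ereal_sup => _ [k [y [hy ->]]].
  rewrite hbE -EFinM -EFinB lee_fin.
  have : ((Sk A k.+1 y - k.+1%:R * b)%:E <= uA lam x0 A (sshift x))%E.
    apply: ereal_sup_ubound; exists k.+1, y; split; first by rewrite iterS hy.
    by rewrite hbE -EFinM -EFinB.
  rewrite uA_fin lee_fin /Sk big_ord_recr /= hy -/(Sk A k y) -natr1 mulrDl mul1r.
  set u := k%:R * b; lra.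
rewrite (uA_fin x) (uA_fin (sshift x)) hbE -?EFinD -?EFinB lee_fin.
by move: h; rewrite uA_fin lee_fin; lra.
Qed.

Lemma extend (x x' y : Sigma M) n k : (1 <= k)%N ->
  (forall j, (j < k)%N -> sval x j = sval x' j) ->
  iter n (@sshift M) y = x ->
  exists y' : Sigma M, iter n (@sshift M) y' = x' /\
    Sk A n y - Sk A n y' <= HA / (1 - lam) * lam ^+ k.
Proof.
move=> k1 agr hy.
pose w j := if (j < n)%N then sval y j else sval x' (j - n)%N.
have wy j : (j < n + k)%N -> w j = sval y j.
  rewrite /w => jnk; case: ifP => // /negbT; rewrite -leqNgt => nj.
  rewrite -agr; last lia.
  by rewrite -hy iter_val subnKC.
have adm : admissible M w.
  move=> j; case: (ltnP j.+1 (n + k)) => h.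
    by rewrite !wy; [exact: (svalP y j) | lia | lia].
  rewrite /w ifF; last by apply/negbTE; rewrite -leqNgt; lia.
  rewrite ifF; last by apply/negbTE; rewrite -leqNgt; lia.
  have -> : (j.+1 - n = (j - n).+1)%N by lia.
  exact: (svalP x' _).
exists (exist _ w adm); split.
  apply: sig_eqP; apply: funext => j; rewrite iter_val /= /w ifF.
    by rewrite addKn.
  by apply/negbTE; rewrite -leqNgt leq_addr.
rewrite /Sk -sumrB.
apply: (@le_trans _ _ (\sum_(j < n) HA * lam ^+ k * lam ^+ (n - j))).
  apply: ler_sum => j _.
  have jn := ltn_ord j.
  rewrite -mulrA -exprD -lee_fin.
  apply: le_trans (HV _ _); last lia.
  rewrite EFinB; apply: var_pair; apply: (dist_le l0 l1) => i hi.
  rewrite !iter_val /= wy //; lia.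
have hS : \sum_(j < n) lam ^+ (n - j) <= (1 - lam)^-1.
  rewrite (reindex_inj rev_ord_inj) /=.
  apply: le_trans (geo_le l0 l1 n); apply: ler_sum => j _.
  have jn := ltn_ord j.
  have -> : (n - (n - j.+1) = j.+1)%N by lia.
  by rewrite exprS ler_piMl ?exprn_ge0 ?ltW.
rewrite -mulr_sumr; apply: le_trans (ler_wpM2l _ hS) _.
  by rewrite mulr_ge0 ?exprn_ge0 ?ltW.
by rewrite mulrAC.
Qed.

Lemma uA_var k : (1 <= k)%N ->
  (VarkE lam (uA lam x0 A) k <= (HA / (1 - lam) * lam ^+ k)%:E)%E.
Proof.
move=> k1; have hbE := beta_fin; set b := fine _ in hbE.
have C0 : 0 <= HA / (1 - lam) * lam ^+ k.
  by apply: mulr_ge0; [apply: divr_ge0; [exact: ltW | rewrite subr_ge0; exact: ltW] | exact: exprn_ge0 (ltW l0)].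
apply: ge_ereal_sup => _ [x [x' [dxx' ->]]].
have agr := dist_agree l0 l1 _ _ _ dxx'.
suff h : (uA lam x0 A x <= (fine (uA lam x0 A x') + HA / (1 - lam) * lam ^+ k)%:E)%E.
  rewrite (uA_fin x) (uA_fin x') -EFinB lee_fin.
  by move: h; rewrite uA_fin lee_fin; lra.
apply: ge_ereal_sup => _ [n [y [hy ->]]].
rewrite hbE -EFinM -EFinB lee_fin.
have [y' [hy' hd]] := extend x x' y n k k1 agr hy.
have : ((Sk A n y' - n%:R * b)%:E <= uA lam x0 A x')%E.
  apply: ereal_sup_ubound; exists n, y'; split => //.
  by rewrite hbE -EFinM -EFinB.
rewrite uA_fin lee_fin; lra.
Qed.
End Main.

Theorem mainTheorem5 (R : realType) (lam : R) (M : nat -> nat -> bool)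
  (F : set nat) (K0 : nat) (x0 : Sigma M) (A : Sigma M -> R) (HA : R) :
  0 < lam < 1 ->
  primitive_with M F K0 ->
  (exists c : R, forall x, A x <= c) ->
  0 < HA ->
  (forall k : nat, (1 <= k)%N -> (Vark lam A k <= (HA * lam ^+ k)%:E)%E) ->
  (-oo < infAF F A)%E ->
  (forall x : Sigma M,
     (0 <= uA lam x0 A x)%E /\
     (uA lam x0 A x <=
        maxe (Var lam A + (K0%:R)%:E * (supA A - infAF F A))
             ((K0%:R)%:E * (supA A - betaA lam x0 A)))%E) /\
  (forall x : Sigma M,
     ((A x)%:E + uA lam x0 A x - uA lam x0 A (sshift x) <= betaA lam x0 A)%E) /\
  (forall k : nat, (1 <= k)%N ->
     (VarkE lam (uA lam x0 A) k <= (HA / (1 - lam) * lam ^+ k)%:E)%E).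
Proof.
move=> /andP[l0 l1] HP [c hc] HA0 HV hinf.
split; [move=> x; split|split; [move=> x|move=> k k1]].
- exact: uA_ge0.
- by eapply uA_ub; eassumption.
- by eapply uA_shift; eassumption.
- by eapply uA_var; eassumption.
Qed.
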